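(* Consider the multivariate linear model ${\bf y}_i={B^*}^T{\bf x}_i+\boldsymbol\epsilon_i$, $i=1,\dots,n$, with fixed design $X=({\bf x}_1,\dots,{\bf x}_n)^T\in\mathbb{R}^{n\times p}$, $n>p$, $X^TX$ invertible, unknown $B^*=(\boldsymbol\beta^*_1,\dots,\boldsymbol\beta^*_r)\in\mathbb{R}^{p\times r}$, and errors $\boldsymbol\epsilon_i=(\epsilon_{i1},\dots,\epsilon_{ir})^T$ i.i.d. over $i$ with mean zero, $E(\epsilon_{ic}^2)=1$ for all $i,c$, and $E(\epsilon_{ic}\epsilon_{ik})=\rho$ for $c\neq k$, where $\rho\in(0,1)$. Fix a partition $D=(D_1,\dots,D_Q)$ of $\{1,\dots,r\}$. Let $\dot B=(\dot{\boldsymbol\beta}_1,\dots,\dot{\boldsymbol\beta}_r)$ with $\dot{\boldsymbol\beta}_c=(X^TX)^{-1}X^T{\bf y}_c$ be the OLS estimates, and for $\gamma\ge0$ let $\bar B=\bar B(\gamma)$ be the minimizer over $B\in\mathbb{R}^{p\times r}$ of $$\frac{1}{2n}\sum_{i=1}^n\sum_{c=1}^r (y_{ic}-{\bf x}_i^T\boldsymbol\beta_c)^2+\frac{\gamma}{2n}\sum_{q=1}^Q\frac{1}{|D_q|}\sum_{l,m\in D_q}\|X(\boldsymbol\beta_l-\boldsymbol\beta_m)\|_2^2$$ (lasso parameter $\delta=0$). Then, for fixed $n$ and $p$, there exists $\gamma>0$ such that $$E\left(\|\bar B-B^*\|_2^2\right)\le E\left(\|\dot B-B^*\|_2^2\r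ight).$$
   Context: ${\bf y}_c\in\mathbb{R}^n$ is the $c$th column of $Y=({\bf y}_1,\dots,{\bf y}_n)^T\in\mathbb{R}^{n\times r}$ (response vectors ${\bf y}_i\in\mathbb{R}^r$ as rows), $y_{ic}$ its $(i,c)$ entry. For a matrix, $\|\cdot\|_2$ denotes the entrywise $L_2$ norm. The inner sum $\sum_{l,m\in D_q}$ runs over all ordered pairs $(l,m)$ in $D_q$. Expectations are over the errors. It is not assumed that responses in the same cluster have equal coefficients. *)

(* Defs.v *)
From HB Require Import structures.
From mathcomp Require Import all_boot all_order all_algebra.
From mathcomp Require Import all_classical all_reals.
From mathcomp Require Import measure lebesgue_measure lebesgue_integral probability.
Set Implicit Arguments. Unset Strict Implicit. Unset Printing Implicit Defensive.
Import Order.TTheory GRing.Theory Num.Theory.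
Local Open Scope ring_scope.
Local Open Scope classical_set_scope.

Definition sqnorm {R : realType} {m k : nat} (A : 'M[R]_(m, k)) : R :=
  \sum_(i < m) \sum_(j < k) A i j ^+ 2.

Definition ols {R : realType} {n p r : nat} (X : 'M[R]_(n, p)) (Y : 'M[R]_(n, r))
  : 'M[R]_(p, r) := invmx (X^T *m X) *m (X^T *m Y).

Definition objective {R : realType} {n p r : nat} (D : {set {set 'I_r}})
  (gamma : R) (X : 'M[R]_(n, p)) (Y : 'M[R]_(n, r)) (B : 'M[R]_(p, r)) : R :=
  (2 * n%:R)^-1 * (\sum_(i < n) \sum_(c < r) (Y i c - (X *m B) i c) ^+ 2)
  + gamma / (2 * n%:R) *
    \sum_(S in D) (#|S|%:R)^-1 *
      \sum_(l in S) \sum_(m in S) \sum_(i < n) ((X *m B) i l - (X *m B) i m) ^+ 2.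

Definition is_minimizer {R : realType} {n p r : nat} (D : {set {set 'I_r}})
  (gamma : R) (X : 'M[R]_(n, p)) (Y : 'M[R]_(n, r)) (Bbar : 'M[R]_(p, r)) : Prop :=
  forall B : 'M[R]_(p, r), objective D gamma X Y Bbar <= objective D gamma X Y B.

(* Mutual independence of the rows eps_1, ..., eps_n (random vectors in R^r),
   stated as the product rule on measurable rectangles (a generating pi-system);
   sub-families are covered by taking A i c = setT. *)
Definition rows_independent {d} {T : measurableType d} {R : realType}
  (P : probability T R) {n r : nat} (eps : 'I_n -> 'I_r -> T -> R) : Prop :=
  forall A : 'I_n -> 'I_r -> set R, (forall i c, measurable (A i c)) ->
    P (\bigcap_(i in [set: 'I_n]) \bigcap_(c in [set: 'I_r]) (eps i c @^-1` A i c))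
    = (\prod_(i < n) P (\bigcap_(c in [set: 'I_r]) (eps i c @^-1` A i c)))%E.

Definition rows_identically_distributed {d} {T : measurableType d} {R : realType}
  (P : probability T R) {n r : nat} (eps : 'I_n -> 'I_r -> T -> R) : Prop :=
  forall (i j : 'I_n) (A : 'I_r -> set R), (forall c, measurable (A c)) ->
    P (\bigcap_(c in [set: 'I_r]) (eps i c @^-1` A c))
    = P (\bigcap_(c in [set: 'I_r]) (eps j c @^-1` A c)).

(* Main.v *)
Require Import Defs.
From HB Require Import structures.
From mathcomp Require Import all_boot all_order all_algebra.
From mathcomp Require Import all_classical all_reals.
From mathcomp Require Import measure lebesgue_measure lebesgue_integral probability.
From mathcomp Require Import measurable_realfun hoelder exp.
From mathcomp Require Import ring lra.
Import Order.TTheory GRing.Theory Num.Theory.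
Local Open Scope ring_scope.

Section Alg.
Context {R : realType}.

Definition ip {m k : nat} (A B : 'M[R]_(m, k)) : R :=
  \sum_(i < m) \sum_(j < k) A i j * B i j.

Lemma sqnorm_ip {m k} (A : 'M[R]_(m, k)) : sqnorm A = ip A A.
Proof. by apply: eq_bigr => i _; apply: eq_bigr => j _; rewrite expr2. Qed.

Lemma ipC {m k} (A B : 'M[R]_(m, k)) : ip A B = ip B A.
Proof. by apply: eq_bigr => i _; apply: eq_bigr => j _; rewrite mulrC. Qed.

Lemma ipDl {m k} (A B C : 'M[R]_(m, k)) : ip (A + B) C = ip A C + ip B C.
Proof.
rewrite /ip -big_split; apply: eq_bigr => i _.
by rewrite -big_split; apply: eq_bigr => j _; rewrite mxE mulrDl.
Qed.

Lemma ipDr {m k} (A B C : 'M[R]_(m, k)) : ip C (A + B) = ip C A + ip C B.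
Proof. by rewrite ipC ipDl (ipC A) (ipC B). Qed.

Lemma ipZl {m k} a (A B : 'M[R]_(m, k)) : ip (a *: A) B = a * ip A B.
Proof.
rewrite /ip mulr_sumr; apply: eq_bigr => i _.
by rewrite mulr_sumr; apply: eq_bigr => j _; rewrite mxE mulrA.
Qed.

Lemma ipZr {m k} a (A B : 'M[R]_(m, k)) : ip B (a *: A) = a * ip B A.
Proof. by rewrite ipC ipZl ipC. Qed.

Lemma ipNl {m k} (A B : 'M[R]_(m, k)) : ip (- A) B = - ip A B.
Proof. by rewrite -scaleN1r ipZl mulN1r. Qed.

Lemma ipNr {m k} (A B : 'M[R]_(m, k)) : ip B (- A) = - ip B A.
Proof. by rewrite ipC ipNl ipC. Qed.

Lemma ipBl {m k} (A B C : 'M[R]_(m, k)) : ip (A - B) C = ip A C - ip B C.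
Proof. by rewrite ipDl ipNl. Qed.

Lemma ipBr {m k} (A B C : 'M[R]_(m, k)) : ip C (A - B) = ip C A - ip C B.
Proof. by rewrite ipDr ipNr. Qed.

Lemma ip_trace {m k} (A B : 'M[R]_(m, k)) : ip A B = \tr (A^T *m B).
Proof.
rewrite /mxtrace /ip exchange_big; apply: eq_bigr => j _.
rewrite mxE; apply: eq_bigr => i _; by rewrite mxE.
Qed.

Lemma ip_mull {m m' k} (X : 'M[R]_(m, m')) (A : 'M[R]_(m', k)) B :
  ip (X *m A) B = ip A (X^T *m B).
Proof. by rewrite !ip_trace trmx_mul mulmxA. Qed.

Lemma ip_mulr {m k} k' (A : 'M[R]_(m, k)) (N : 'M[R]_(k, k')) B :
  ip (A *m N) B = ip A (B *m N^T).
Proof. by rewrite !ip_trace trmx_mul -mulmxA mxtrace_mulC mulmxA. Qed.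

Lemma sqnormD {m k} (A C : 'M[R]_(m, k)) :
  sqnorm (A + C) = sqnorm A + 2 * ip A C + sqnorm C.
Proof. rewrite !sqnorm_ip ipDl !ipDr (ipC C A); ring. Qed.

Lemma sqnormB {m k} (A C : 'M[R]_(m, k)) :
  sqnorm (A - C) = sqnorm A - 2 * ip A C + sqnorm C.
Proof. rewrite !sqnorm_ip ipBl !ipBr (ipC C A); ring. Qed.

Lemma pw_id {p r} (O C : 'M[R]_(p, r)) (K : 'M[R]_r) (t : R) :
  K^T = K -> K *m K = K ->
  sqnorm ((C + O) *m (1%:M - t *: K) - C) =
  sqnorm O - (2 * t - t ^+ 2) * sqnorm (O *m K)
  - (2 * t - 2 * t ^+ 2) * ip (O *m K) (C *m K) + t ^+ 2 * sqnorm (C *m K).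
Proof.
move=> Kt KK.
have e : (C + O) *m (1%:M - t *: K) - C = O - t *: (O *m K) - t *: (C *m K).
  rewrite mulmxBr mulmx1 -scalemxAr mulmxDl scalerDr.
  by apply/matrixP => i j; rewrite !mxE; ring.
have e1 : ip O (O *m K) = ip (O *m K) (O *m K).
  by rewrite [RHS]ip_mulr Kt -mulmxA KK.
have e2 : ip O (C *m K) = ip (O *m K) (C *m K).
  by rewrite [RHS]ip_mulr Kt -mulmxA KK.
rewrite e !sqnorm_ip !ipBl !ipBr !ipZl !ipZr e1 e2 (ipC (C *m K) O) e2.
rewrite (ipC (C *m K) (O *m K)) (ipC (O *m K) O) e1.
ring.
Qed.

Lemma sqnorm_ge0 {m k} (A : 'M[R]_(m, k)) : 0 <= sqnorm A.
Proof. by apply: sumr_ge0 => i _; apply: sumr_ge0 => j _; exact: sqr_ge0. Qed.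

Lemma sqnorm_eq0 {m k} (A : 'M[R]_(m, k)) : sqnorm A = 0 -> A = 0.
Proof.
move=> H; apply/matrixP => i j; rewrite mxE.
have Hi : \sum_(j < k) A i j ^+ 2 = 0.
  move: H; move/psumr_eq0P => H0; apply: H0 => // i' _.
  by apply: sumr_ge0 => j' _; exact: sqr_ge0.
have Hj : A i j ^+ 2 = 0.
  move: Hi; move/psumr_eq0P => H1; apply: H1 => // j' _; exact: sqr_ge0.
by apply/eqP; rewrite -sqrf_eq0 Hj.
Qed.


Definition Gm {r} (D : {set {set 'I_r}}) : 'M[R]_r :=
  \matrix_(l < r, m < r) ((m \in finset.pblock D l)%:R / (#|finset.pblock D l|%:R)).
Definition Km {r} (D : {set {set 'I_r}}) : 'M[R]_r := 1%:M - Gm D.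

Section Part.
Variables (r : nat) (D : {set {set 'I_r}}).
Hypothesis hD : finset.partition D [set: 'I_r]%SET.

Let tI : finset.trivIset D. Proof. exact: finset.partition_trivIset hD. Qed.
Let cov : finset.cover D = [set: 'I_r]%SET. Proof. by case/and3P: hD => /eqP. Qed.
Lemma memb l : l \in finset.pblock D l.
Proof. by rewrite finset.mem_pblock cov inE. Qed.

Lemma Gm_sym_entry l m : Gm D l m = Gm D m l.
Proof.
rewrite !mxE; case: (boolP (m \in finset.pblock D l)) => H.
  by rewrite (finset.same_pblock tI H) memb.
case: (boolP (l \in finset.pblock D m)) => H'; last by rewrite !mul0r.
by move: H; rewrite (finset.same_pblock tI H') memb => /negP.
Qed.

Lemma Gm_row l : \sum_m Gm D l m = 1.
Proof.
under eq_bigr do rewrite mxE.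
rewrite -mulr_suml.
rewrite (eq_bigr (fun m => if m \in finset.pblock D l then 1 else 0)); last first.
  by move=> m _; case: (m \in finset.pblock D l).
rewrite -big_mkcond /= sumr_const.
have : (0 < #|finset.pblock D l|)%N by apply/card_gt0P; exists l; exact: memb.
move=> h; rewrite mulfV //.
by rewrite pnatr_eq0 -lt0n.
Qed.

Lemma Gm_col m : \sum_l Gm D l m = 1.
Proof. under eq_bigr do rewrite Gm_sym_entry; exact: Gm_row. Qed.

Lemma Gm_tr : (Gm D)^T = Gm D.
Proof. by apply/matrixP => l m; rewrite [LHS]mxE Gm_sym_entry. Qed.

Lemma Gm_idem : Gm D *m Gm D = Gm D.
Proof.
apply/matrixP => l m; rewrite [LHS]mxE.
transitivity (\sum_k Gm D l k * Gm D l m).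
  apply: eq_bigr => k _; case: (boolP (k \in finset.pblock D l)) => H.
    by rewrite [Gm D k m]mxE [Gm D l m]mxE (finset.same_pblock tI H).
  by rewrite [Gm D l k]mxE (negbTE H) !mul0r.
by rewrite -mulr_suml Gm_row mul1r.
Qed.

Lemma Km_tr : (Km D)^T = Km D.
Proof. by rewrite /Km linearB /= trmx1 Gm_tr. Qed.

Lemma Km_idem : Km D *m Km D = Km D.
Proof.
by rewrite /Km mulmxBl !mulmxBr !mulmx1 mul1mx Gm_idem subrr subr0.
Qed.

Lemma quad_row (a : 'I_r -> R) :
  \sum_l \sum_m Gm D l m * (a l - a m) ^+ 2
  = 2 * \sum_l a l ^+ 2 - 2 * \sum_l \sum_m Gm D l m * (a l * a m).
Proof.
have e : forall l m, Gm D l m * (a l - a m) ^+ 2 =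
   Gm D l m * a l ^+ 2 + Gm D l m * a m ^+ 2 - 2 * (Gm D l m * (a l * a m)).
  by move=> l m; ring.
transitivity (\sum_l (\sum_m Gm D l m * a l ^+ 2 + \sum_m Gm D l m * a m ^+ 2
   - \sum_m 2 * (Gm D l m * (a l * a m)))).
  by apply: eq_bigr => l _; rewrite -big_split -sumrB /=; apply: eq_bigr => m _; rewrite e.
rewrite sumrB big_split /=.
have -> : \sum_l \sum_m Gm D l m * a l ^+ 2 = \sum_l a l ^+ 2.
  by apply: eq_bigr => l _; rewrite -mulr_suml Gm_row mul1r.
have -> : \sum_l \sum_m Gm D l m * a m ^+ 2 = \sum_l a l ^+ 2.
  by rewrite exchange_big; apply: eq_bigr => m _; rewrite -mulr_suml Gm_col mul1r.
have -> : \sum_l \sum_m 2 * (Gm D l m * (a l * a m)) =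
    2 * \sum_l \sum_m Gm D l m * (a l * a m).
  by rewrite mulr_sumr; apply: eq_bigr => l _; rewrite mulr_sumr.
ring.
Qed.

Lemma pen_eq n (U : 'M[R]_(n, r)) :
  \sum_(S in D) (#|S|%:R)^-1 *
      \sum_(l in S) \sum_(m in S) \sum_(i < n) (U i l - U i m) ^+ 2
  = 2 * sqnorm (U *m Km D).
Proof.
pose f l m := \sum_(i < n) (U i l - U i m) ^+ 2.
transitivity (\sum_l \sum_m Gm D l m * f l m).
  transitivity (\sum_(S in D) \sum_(l in S)
     ((#|finset.pblock D l|%:R)^-1 * \sum_(m in finset.pblock D l) f l m)).
    apply: eq_bigr => S SD; rewrite mulr_sumr; apply: eq_bigr => l lS.
    by rewrite (finset.def_pblock tI SD lS).
  rewrite -(finset.set_partition_big _ hD).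
  apply: eq_big => [l|l _]; first by rewrite finset.in_setT.
  rewrite mulr_sumr big_mkcond /=; apply: eq_bigr => m _.
  by rewrite mxE; case: (m \in _) => /=; rewrite ?div1r ?mul0r.
transitivity (\sum_(i < n) \sum_l \sum_m Gm D l m * (U i l - U i m) ^+ 2).
  rewrite [RHS]exchange_big; apply: eq_bigr => l _.
  rewrite [RHS]exchange_big; apply: eq_bigr => m _.
  by rewrite mulr_sumr.
under eq_bigr do rewrite quad_row.
rewrite sumrB -!mulr_sumr.
rewrite sqnorm_ip ip_mulr Km_tr -mulmxA Km_idem /Km mulmxBr mulmx1 ipBr.
rewrite -sqnorm_ip.
have -> : ip U (U *m Gm D) = \sum_(i < n) \sum_l \sum_m Gm D l m * (U i l * U i m).
  apply: eq_bigr => i _; apply: eq_bigr => l _.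
  rewrite mxE mulr_sumr; apply: eq_bigr => m _.
  by rewrite Gm_sym_entry; ring.
by rewrite mulrBr.
Qed.

Lemma objE n p (g : R) (X : 'M[R]_(n, p)) (Y : 'M[R]_(n, r)) (B : 'M[R]_(p, r)) :
  objective D g X Y B =
  (2 * n%:R)^-1 * (sqnorm (Y - X *m B) + 2 * g * sqnorm (X *m B *m Km D)).
Proof.
rewrite /objective pen_eq.
have -> : \sum_(i < n) \sum_(c < r) (Y i c - (X *m B) i c) ^+ 2 = sqnorm (Y - X *m B).
  by apply: eq_bigr => i _; apply: eq_bigr => c _; rewrite !mxE.
ring.
Qed.

Definition tpar (g : R) := 2 * g / (1 + 2 * g).
Definition Smx (g : R) : 'M[R]_r := 1%:M - tpar g *: Km D.

Lemma KK m (B : 'M[R]_(m, r)) : B *m Km D *m Km D = B *m Km D.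
Proof. by rewrite -mulmxA Km_idem. Qed.

Lemma minimizer_eq n p (X : 'M[R]_(n, p)) (Y : 'M[R]_(n, r)) (g : R) (Bbar : 'M[R]_(p, r)) :
  (0 < n)%N -> X^T *m X \in unitmx -> 0 <= g -> is_minimizer D g X Y Bbar ->
  Bbar = ols X Y *m Smx g.
Proof.
move=> n0 unit g0 hmin.
set t := tpar g.
set B0 := ols X Y *m Smx g.
pose J (B : 'M[R]_(p, r)) := sqnorm (Y - X *m B) + 2 * g * sqnorm (X *m B *m (Km D)).
set W := X^T *m Y.
have XXB0 : X^T *m X *m B0 = W *m Smx g.
  by rewrite /B0 /ols !mulmxA (mulmxV unit) mul1mx.
have WS : W *m Smx g = W - t *: (W *m (Km D)).
  by rewrite /Smx mulmxBr mulmx1 -scalemxAr.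
have WSK : W *m Smx g *m (Km D) = (1 - t) *: (W *m (Km D)).
  by rewrite WS mulmxBl -scalemxAl KK scalerBl scale1r.
have tE : t = 2 * g * (1 - t).
  rewrite /t /tpar; have h : 1 + 2 * g != 0 by rewrite gt_eqF //; lra.
  by field.
have FOC : X^T *m (Y - X *m B0) = (2 * g) *: (X^T *m X *m B0 *m (Km D)).
  rewrite mulmxBr mulmxA XXB0 WSK WS opprB addrC subrK.
  by rewrite scalerA -tE.
have JE : forall H, J (B0 + H) = J B0 + sqnorm (X *m H) + 2 * g * sqnorm (X *m H *m (Km D)).
  move=> H; rewrite /J.
  have -> : Y - X *m (B0 + H) = (Y - X *m B0) - X *m H by rewrite mulmxDr opprD addrA.
  have -> : X *m (B0 + H) *m (Km D) = X *m B0 *m (Km D) + X *m H *m (Km D) by rewrite mulmxDr mulmxDl.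
  rewrite (sqnormB (Y - X *m B0)) (sqnormD (X *m B0 *m Km D)).
  have c1 : ip (X *m H) (Y - X *m B0) = ip H (X^T *m (Y - X *m B0)) by rewrite ip_mull.
  have c2 : ip (X *m H *m (Km D)) (X *m B0 *m (Km D)) = ip H (X^T *m X *m B0 *m (Km D)).
    by rewrite ip_mulr Km_tr KK ip_mull !mulmxA.
  rewrite (ipC (Y - X *m B0)) c1 (ipC (X *m B0 *m (Km D))) c2 FOC ipZr.
  ring.
have hJ : J Bbar <= J B0.
  have := hmin B0; rewrite !objE -/(J Bbar) -/(J B0).
  have h : 0 < (2 * n%:R : R)^-1 by rewrite invr_gt0 mulr_gt0 // ltr0n.
  by rewrite ler_pM2l.
have eB : Bbar = B0 + (Bbar - B0) by rewrite addrC subrK.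
move: hJ; rewrite eB JE.
set H := Bbar - B0.
move=> hle.
have s1 := sqnorm_ge0 (X *m H).
have s2 := sqnorm_ge0 (X *m H *m (Km D)).
have : sqnorm (X *m H) = 0.
  apply/eqP; rewrite eq_le s1 andbT.
  have : 0 <= 2 * g * sqnorm (X *m H *m (Km D)) by rewrite mulr_ge0 // mulr_ge0.
  move: hle; set a := J B0; set b := sqnorm (X *m H); set c := 2 * g * _.
  by move=> *; lra.
move/sqnorm_eq0 => XH0.
have H0 : H = 0.
  by rewrite -[H]mul1mx -(mulVmx unit) -mulmxA -[X^T *m X *m H]mulmxA XH0 !mulmx0.
by rewrite -eB in H0 *; rewrite /H in H0; apply/eqP; rewrite -subr_eq0 H0.
Qed.

End Part.

Lemma tpar_ge0 g : 0 <= g -> 0 <= tpar g.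
Proof. by move=> g0; rewrite /tpar divr_ge0 // ?mulr_ge0 //; lra. Qed.

Lemma tpar_le1 g : 0 <= g -> tpar g <= 1.
Proof.
move=> g0; rewrite /tpar ler_pdivrMr; last lra.
lra.
Qed.

Lemma le_sum_term {I : finType} {F : I -> R} x :
  (forall i, 0 <= F i) -> F x <= \sum_i F i.
Proof.
move=> h; rewrite (bigD1 x) //= lerDl; exact: sumr_ge0.
Qed.
End Alg.

Section indep.
Local Open Scope classical_set_scope.
Context d (T : measurableType d) (R : realType) (P : probability T R).
Local Open Scope ereal_scope.

Lemma indep_E_mul0 (X Y : {RV P >-> R}) :
  (forall A B, measurable A -> measurable B ->
     P (X @^-1` A `&` Y @^-1` B) = P (X @^-1` A) * P (Y @^-1` B)) ->
  P.-integrable setT (EFin \o X) -> P.-integrable setT (EFin \o Y) ->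
  P.-integrable setT (EFin \o (fun w => X w * Y w)%R) ->
  'E_P[Y] = 0 -> 'E_P[fun w => (X w * Y w)%R] = 0.
Proof.
move=> ind iX iY iXY EY0.
have mZ : measurable_fun setT (fun w => (X w, Y w)) by exact: measurable_fun_pair.
pose Z : {mfun T >-> (R * R)%type} := HB.pack (fun w => (X w, Y w)) (isMeasurableFun.Build _ _ _ _ _ mZ).
pose mu := distribution P Z.
pose muX := distribution P X.
pose muY := distribution P Y.
have eqm : forall A, measurable A -> (muX \x muY) A = mu A.
  apply: product_measure_unique => A B mA mB.
  rewrite /mu /muX /muY /distribution /pushforward -ind //.
pose f := fun z : (R * R)%type => (z.1 * z.2)%:E.
have mf : measurable_fun [set: (R * R)%type] f.
  apply: measurableT_comp => //; exact: measurable_funM.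
have ZE : (fun w => X w * Y w)%R = (fun z : (R * R)%type => z.1 * z.2)%R \o Z by [].
have iPf : P.-integrable setT (f \o Z) by [].
have imu : mu.-integrable setT f.
  exact: integrable_pushforward.
have iprod : (muX \x muY).-integrable setT f.
  apply/integrableP; split => //.
  rewrite (eq_measure_integral mu); last by move=> A mA _; exact: eqm.
  by move/integrableP : imu => [].
have iYd : muY.-integrable setT EFin.
  exact: integrable_pushforward.
rewrite unlock.
transitivity (\int[mu]_z f z).
  by rewrite integral_distribution.
rewrite (eq_measure_integral (muX \x muY)); last by move=> A mA _; exact: (esym (eqm A mA)).
rewrite -integral12_prod_meas1 //.
rewrite /fubini_F.
transitivity (\int[muX]_x (cst 0 x)); last by rewrite integral0.
apply: eq_integral => x _.
rewrite /f /=.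
under eq_integral do rewrite EFinM.
rewrite integralZl //.
have -> : \int[muY]_y y%:E = 0.
  rewrite integral_distribution //.
  rewrite -EY0 unlock. done.
by rewrite mule0.
Qed.
End indep.

Section indep2.
Local Open Scope classical_set_scope.
Context d (T : measurableType d) (R : realType) (P : probability T R).
Local Open Scope ereal_scope.

Lemma pair_indep n r (eps : 'I_n -> 'I_r -> T -> R) (i j : 'I_n) (c k : 'I_r) :
  i != j -> rows_independent P eps ->
  forall A B, measurable A -> measurable B ->
  P (eps i c @^-1` A `&` eps j k @^-1` B) = P (eps i c @^-1` A) * P (eps j k @^-1` B).
Proof.
move=> ij H A B mA mB.
pose F (i' : 'I_n) (c' : 'I_r) := if (i' == i) && (c' == c) then A
   else if (i' == j) && (c' == k) then B else setT.
have mF : forall i' c', measurable (F i' c').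
  by move=> i' c'; rewrite /F; case: ifP => _ //; case: ifP.
have := H F mF.
have GE : forall i', \bigcap_(c' in [set: 'I_r]) (eps i' c' @^-1` F i' c') =
   if i' == i then eps i c @^-1` A else if i' == j then eps j k @^-1` B else setT.
  move=> i'; apply/seteqP; split => x.
    move=> Hx; case: (boolP (i' == i)) => [/eqP ei|ni].
      by subst i'; have := Hx c I; rewrite /F !eqxx /=.
    case: (boolP (i' == j)) => [/eqP ej|nj] //.
    by subst i'; have := Hx k I; rewrite /F (negbTE ni) !eqxx /=.
  move=> Hx c' _; rewrite /F /=.
  case: (boolP (i' == i)) => [/eqP ei|ni] /=.
    subst i'; rewrite eqxx in Hx.
    case: (boolP (c' == c)) => [/eqP -> //|nc] /=.
    by rewrite (negbTE ij).
  rewrite (negbTE ni) in Hx.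
  case: (boolP (i' == j)) => [/eqP ej|nj] /=.
    subst i'; rewrite eqxx in Hx.
    by case: (boolP (c' == k)) => [/eqP -> //|nk].
  by [].
have LE : \bigcap_(i' in [set: 'I_n]) \bigcap_(c' in [set: 'I_r]) (eps i' c' @^-1` F i' c')
   = eps i c @^-1` A `&` eps j k @^-1` B.
  apply/seteqP; split => x.
    move=> Hx; have := Hx i I; have := Hx j I; rewrite !GE eqxx (negbTE ij) eq_sym (negbTE ij) eqxx.
    by move=> ? ?; split.
  move=> [xA xB] i' _; rewrite GE.
  by case: ifPn => _ //; case: ifPn.
rewrite LE => ->.
under eq_bigr do rewrite GE.
rewrite (bigD1 i) //=. rewrite ifT //.
rewrite (bigD1 j) //=; last by rewrite eq_sym.
rewrite ifF; last by rewrite eq_sym; exact: negbTE.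
rewrite ifT //.
rewrite big1 ?mule1 //.
move=> i' /andP[ni nj]; rewrite (negbTE ni) (negbTE nj).
exact: probability_setT.
Qed.
End indep2.

Section ProbL2.
Context d (T : measurableType d) (R : realType) (P : probability T R).

Lemma L2_of (f : {RV P >-> R}) :
  ('E_P[fun w => (f w ^+ 2)%R])%E \is a fin_num -> (f : T -> R) \in Lfun P 2%:E.
Proof.
move=> hf; rewrite inE; apply/andP; split.
  by rewrite inE /=; exact: measurable_funPT.
rewrite inE /= /finite_norm.
apply: (@lty_poweRy _ _ 2%R); first by rewrite pnatr_eq0.
rewrite powR_Lnorm; last by rewrite pnatr_eq0.
under eq_integral => x _ do rewrite /comp abse_EFin poweR_EFin powR_mulrn ?real_normK ?num_real //.
move: hf; rewrite unlock.
by move=> /fin_numP[_]; rewrite ltey.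
Qed.
End ProbL2.

Section Noise.
Context d (T : measurableType d) (R : realType) (P : probability T R).
Variables (n r : nat) (eps : 'I_n -> 'I_r -> {RV P >-> R}) (rho : R).
Hypothesis Hind : rows_independent P (fun i c => eps i c : T -> R).
Hypothesis HE0 : forall i c, ('E_P[eps i c] = 0)%E.
Hypothesis HE2 : forall i c, ('E_P[fun w => (eps i c w ^+ 2)%R] = 1)%E.
Hypothesis HEc : forall i c k, c != k ->
  ('E_P[fun w => (eps i c w * eps i k w)%R] = rho%:E)%E.

Notation L1 := (Lfun P 1).
Notation L2 := (Lfun P 2%:E).

Lemma LpD {p : \bar R} (p1 : (1 <= p)%E) {f g : T -> R} :
  f \in Lfun P p -> g \in Lfun P p -> (fun w => f w + g w) \in Lfun P p.
Proof. move=> hf hg. exact: (rpredD hf hg). Qed.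

Lemma LpZ {p : \bar R} (p1 : (1 <= p)%E) (a : R) {f : T -> R} :
  f \in Lfun P p -> (fun w => a * f w) \in Lfun P p.
Proof. move=> hf. exact: (rpredZ a hf). Qed.

Lemma Lp0 {p : \bar R} (p1 : (1 <= p)%E) : (fun _ : T => 0 : R) \in Lfun P p.
Proof. exact: rpred0. Qed.

Lemma L2_L1 (f : T -> R) : f \in L2 -> f \in L1.
Proof.
move=> hf; have := Lfun2_mul_Lfun1 hf (Lfun_cst P 1 2).
by have -> : (f \* cst 1) = f by apply/funext => w /=; rewrite mulr1.
Qed.

Lemma L2_mul (f g : T -> R) : f \in L2 -> g \in L2 -> (fun w => f w * g w) \in L1.
Proof. by move=> hf hg; exact: Lfun2_mul_Lfun1. Qed.

Lemma Lp_sum {p : \bar R} (p1 : (1 <= p)%E) (I : Type) (s : seq I) (f : I -> T -> R) :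
  (forall i, f i \in Lfun P p) -> (fun w => \sum_(i <- s) f i w) \in Lfun P p.
Proof.
move=> hf; elim: s => [|x s IH].
  have -> : (fun w => \sum_(i <- [::]) f i w) = (fun _ => 0).
    by apply/funext => w; rewrite big_nil.
  exact: (Lp0 p1).
have -> : (fun w => \sum_(i <- x :: s) f i w) = (fun w => f x w + \sum_(i <- s) f i w).
  by apply/funext => w; rewrite big_cons.
exact: (LpD p1).
Qed.

Lemma epsL2 i c : (eps i c : T -> R) \in L2.
Proof. by apply: L2_of; rewrite HE2. Qed.

Lemma epsL1 i c : (eps i c : T -> R) \in L1.
Proof. exact/L2_L1/epsL2. Qed.

Lemma Eprod i c j k :
  ('E_P[fun w => (eps i c w * eps j k w)%R] =
   (if i == j then (if c == k then 1 else rho) else 0)%:E)%E.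
Proof.
case: (boolP (i == j)) => [/eqP <-|ij].
  case: (boolP (c == k)) => [/eqP <-|ck]; last exact: HEc.
  have -> : (fun w => eps i c w * eps i c w) = (fun w => eps i c w ^+ 2).
    by apply/funext => w; rewrite expr2.
  exact: HE2.
apply: indep_E_mul0.
- move=> A B mA mB. exact: (@pair_indep _ _ _ P n r (fun i c => eps i c : T -> R) i j c k ij Hind A B mA mB).
- exact/Lfun1_integrable/epsL1.
- exact/Lfun1_integrable/epsL1.
- exact/Lfun1_integrable/L2_mul/epsL2/epsL2.
- exact: HE0.
Qed.

Definition Ex (f : T -> R) : R := fine ('E_P[f])%E.

Lemma ExE {f : T -> R} : f \in L1 -> ('E_P[f] = (Ex f)%:E)%E.
Proof. by move=> h; rewrite /Ex fineK // expectation_fin_num. Qed.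

Lemma ExD (f g : T -> R) : f \in L1 -> g \in L1 ->
  Ex (fun w => f w + g w) = Ex f + Ex g.
Proof.
move=> hf hg; apply: EFin_inj.
rewrite -(ExE (LpD (lexx 1%E) hf hg)).
rewrite EFinD -(ExE hf) -(ExE hg). exact: (@expectationD _ _ _ P f g hf hg).
Qed.

Lemma ExZ (a : R) (f : T -> R) : f \in L1 -> Ex (fun w => a * f w) = a * Ex f.
Proof.
move=> hf; apply: EFin_inj.
rewrite -(ExE (LpZ (lexx 1%E) a hf)).
rewrite EFinM -(ExE hf) -(@expectationZl _ _ _ P f a hf).
by congr expectation; apply/funext => w /=; rewrite mulrC.
Qed.

Lemma Ex_cst (a : R) : Ex (fun _ => a) = a.
Proof. by rewrite /Ex (expectation_cst P a). Qed.

Lemma Ex_sum (I : Type) (s : seq I) (f : I -> T -> R) : (forall i, f i \in L1) ->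
  Ex (fun w => \sum_(i <- s) f i w) = \sum_(i <- s) Ex (f i).
Proof.
move=> hf; elim: s => [|x s IH].
  have -> : (fun w => \sum_(i <- [::]) f i w) = (fun _ => 0).
    by apply/funext => w; rewrite big_nil.
  by rewrite Ex_cst big_nil.
have -> : (fun w => \sum_(i <- x :: s) f i w) = (fun w => f x w + \sum_(i <- s) f i w).
  by apply/funext => w; rewrite big_cons.
by rewrite ExD // ?IH ?big_cons //; exact: Lp_sum.
Qed.


Lemma le12 : (1 <= 2%:E :> \bar R)%E.
Proof. by rewrite lee_fin ler1n. Qed.

Definition lin (a : 'M[R]_(n, r)) (w : T) : R :=
  \sum_(i < n) \sum_(c < r) a i c * eps i c w.

Lemma linL2 a : lin a \in L2.
Proof.
rewrite /lin.
apply: (Lp_sum le12) => i.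
apply: (Lp_sum le12) => c.
exact/(LpZ le12)/epsL2.
Qed.

Lemma Ex_lin a : Ex (lin a) = 0.
Proof.
rewrite /lin Ex_sum; last first.
  move=> i; apply: (Lp_sum (lexx 1%E)) => c; exact/(LpZ (lexx 1%E))/epsL1.
apply: big1 => i _; rewrite Ex_sum; last by move=> c; exact/(LpZ (lexx 1%E))/epsL1.
apply: big1 => c _; rewrite ExZ; last exact: epsL1.
by rewrite /Ex HE0 /= mulr0.
Qed.

Lemma row_quad (a : 'I_r -> R) :
  \sum_c \sum_k a c * a k * (if c == k then 1 else rho) =
  (1 - rho) * \sum_c a c ^+ 2 + rho * (\sum_c a c) ^+ 2.
Proof.
have e : forall c, \sum_k a c * a k * (if c == k then 1 else rho) =
    (1 - rho) * a c ^+ 2 + rho * (a c * \sum_k a k).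
  move=> c; rewrite (bigD1 c) //= eqxx.
  rewrite (eq_bigr (fun k => rho * (a c * a k))); last first.
    by move=> k kc; rewrite eq_sym (negbTE kc) mulrC.
  rewrite -mulr_sumr -mulr_sumr [in RHS](bigD1 c) //=.
  ring.
rewrite (eq_bigr _ (fun c _ => e c)) big_split /= -!mulr_sumr.
by rewrite -mulr_suml expr2.
Qed.

Lemma linsqL1 a : (fun w => lin a w ^+ 2) \in L1.
Proof.
have -> : (fun w => lin a w ^+ 2) = (fun w => lin a w * lin a w).
  by apply/funext => w; rewrite expr2.
exact/L2_mul/linL2/linL2.
Qed.

Lemma Ex_lin2 (a : 'M[R]_(n, r)) : 0 < rho ->
  (1 - rho) * \sum_i \sum_c a i c ^+ 2 <= Ex (fun w => lin a w ^+ 2).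
Proof.
move=> rho0.
have pw : (fun w => lin a w ^+ 2) = (fun w => \sum_i \sum_c \sum_j \sum_k
     (a i c * a j k) * (eps i c w * eps j k w)).
  apply/funext => w; rewrite /lin expr2 mulr_suml; apply: eq_bigr => i _.
  rewrite mulr_suml; apply: eq_bigr => c _; rewrite mulr_sumr; apply: eq_bigr => j _.
  rewrite mulr_sumr; apply: eq_bigr => k _; ring.
have hL1 : forall i c j k,
    (fun w => (a i c * a j k) * (eps i c w * eps j k w)) \in L1.
  by move=> i c j k; apply: (LpZ (lexx 1%E)); apply: L2_mul; exact: epsL2.
rewrite pw.
have -> : Ex (fun w => \sum_i \sum_c \sum_j \sum_k
     (a i c * a j k) * (eps i c w * eps j k w)) =
   \sum_i \sum_c \sum_j \sum_k a i c * a j k *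
     (if i == j then (if c == k then 1 else rho) else 0).
  rewrite Ex_sum; last first.
    move=> i; apply: (Lp_sum (lexx 1%E)) => c; apply: (Lp_sum (lexx 1%E)) => j.
    by apply: (Lp_sum (lexx 1%E)) => k; exact: hL1.
  apply: eq_bigr => i _; rewrite Ex_sum; last first.
    move=> c; apply: (Lp_sum (lexx 1%E)) => j.
    by apply: (Lp_sum (lexx 1%E)) => k; exact: hL1.
  apply: eq_bigr => c _; rewrite Ex_sum; last first.
    by move=> j; apply: (Lp_sum (lexx 1%E)) => k; exact: hL1.
  apply: eq_bigr => j _; rewrite Ex_sum; last by move=> k; exact: hL1.
  apply: eq_bigr => k _; rewrite ExZ; last exact/L2_mul/epsL2/epsL2.
  by rewrite /Ex Eprod.
have -> : \sum_i \sum_c \sum_j \sum_k a i c * a j k *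
     (if i == j then (if c == k then 1 else rho) else 0) =
   \sum_i \sum_c \sum_k a i c * a i k * (if c == k then 1 else rho).
  apply: eq_bigr => i _; apply: eq_bigr => c _.
  rewrite (bigD1 i) //= eqxx [X in _ + X]big1 ?addr0 //.
  move=> j ji; apply: big1 => k _.
  by rewrite eq_sym (negbTE ji) mulr0.
rewrite mulr_sumr; apply: ler_sum => i _.
rewrite (row_quad (fun c => a i c)) lerDl.
by apply: mulr_ge0; [exact: ltW | exact: sqr_ge0].
Qed.


Definition Ew (w : T) : 'M[R]_(n, r) := \matrix_(i < n, c < r) eps i c w.

Lemma entry_lin p k (F : 'M[R]_(p, n)) (G : 'M[R]_(r, k)) j c w :
  (F *m Ew w *m G) j c = lin (\matrix_(i < n, l < r) (F j i * G l c)) w.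
Proof.
rewrite /lin mxE [RHS]exchange_big /=; apply: eq_bigr => l _.
rewrite mxE mulr_suml; apply: eq_bigr => i _.
by rewrite !mxE; ring.
Qed.

Lemma entryL2 p k (F : 'M[R]_(p, n)) (G : 'M[R]_(r, k)) j c :
  (fun w => (F *m Ew w *m G) j c) \in L2.
Proof.
have -> : (fun w => (F *m Ew w *m G) j c) = lin (\matrix_(i < n, l < r) (F j i * G l c)).
  by apply/funext => w; rewrite entry_lin.
exact: linL2.
Qed.

Lemma Ex_entry p k (F : 'M[R]_(p, n)) (G : 'M[R]_(r, k)) j c :
  Ex (fun w => (F *m Ew w *m G) j c) = 0.
Proof.
have -> : (fun w => (F *m Ew w *m G) j c) = lin (\matrix_(i < n, l < r) (F j i * G l c)).
  by apply/funext => w; rewrite entry_lin.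
exact: Ex_lin.
Qed.

Lemma sqnormL1 p k (A : T -> 'M[R]_(p, k)) :
  (forall i j, (fun w => A w i j) \in L2) -> (fun w => sqnorm (A w)) \in L1.
Proof.
move=> hA; rewrite /sqnorm.
apply: (Lp_sum (lexx 1%E)) => i; apply: (Lp_sum (lexx 1%E)) => j.
have -> : (fun w => A w i j ^+ 2) = (fun w => A w i j * A w i j).
  by apply/funext => w; rewrite expr2.
exact: L2_mul.
Qed.

Lemma ipL1 p k (A : T -> 'M[R]_(p, k)) (C : 'M[R]_(p, k)) :
  (forall i j, (fun w => A w i j) \in L2) -> (fun w => ip (A w) C) \in L1.
Proof.
move=> hA; rewrite /ip.
apply: (Lp_sum (lexx 1%E)) => i; apply: (Lp_sum (lexx 1%E)) => j.
have -> : (fun w => A w i j * C i j) = (fun w => C i j * A w i j).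
  by apply/funext => w; rewrite mulrC.
exact/(LpZ (lexx 1%E))/L2_L1.
Qed.

Lemma Ex_ip p k (A : T -> 'M[R]_(p, k)) (C : 'M[R]_(p, k)) :
  (forall i j, (fun w => A w i j) \in L2) ->
  (forall i j, Ex (fun w => A w i j) = 0) ->
  Ex (fun w => ip (A w) C) = 0.
Proof.
move=> hA h0; rewrite /ip Ex_sum; last first.
  move=> i; apply: (Lp_sum (lexx 1%E)) => j.
  have -> : (fun w => A w i j * C i j) = (fun w => C i j * A w i j).
    by apply/funext => w; rewrite mulrC.
  exact/(LpZ (lexx 1%E))/L2_L1.
apply: big1 => i _; rewrite Ex_sum; last first.
  move=> j; have -> : (fun w => A w i j * C i j) = (fun w => C i j * A w i j).
    by apply/funext => w; rewrite mulrC.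
  exact/(LpZ (lexx 1%E))/L2_L1.
apply: big1 => j _.
have -> : (fun w => A w i j * C i j) = (fun w => C i j * A w i j).
  by apply/funext => w; rewrite mulrC.
by rewrite ExZ ?h0 ?mulr0 //; exact/L2_L1.
Qed.

Lemma Ex_sqnorm p k (A : T -> 'M[R]_(p, k)) :
  (forall i j, (fun w => A w i j) \in L2) ->
  Ex (fun w => sqnorm (A w)) = \sum_i \sum_j Ex (fun w => A w i j ^+ 2).
Proof.
move=> hA; have hsq : forall i j, (fun w => A w i j ^+ 2) \in L1.
  move=> i j; have -> : (fun w => A w i j ^+ 2) = (fun w => A w i j * A w i j).
    by apply/funext => w; rewrite expr2.
  exact: L2_mul.
rewrite /sqnorm Ex_sum; last by move=> i; apply: (Lp_sum (lexx 1%E)) => j; exact: hsq.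
by apply: eq_bigr => i _; rewrite Ex_sum.
Qed.


Lemma entryL2_1 p (F : 'M[R]_(p, n)) j c : (fun w => (F *m Ew w) j c) \in L2.
Proof.
have -> : (fun w => (F *m Ew w) j c) = (fun w => (F *m Ew w *m 1%:M) j c).
  by apply/funext => w; rewrite mulmx1.
exact: entryL2.
Qed.

Lemma Ex_entry2_lb p k (F : 'M[R]_(p, n)) (G : 'M[R]_(r, k)) j c : 0 < rho ->
  (1 - rho) * \sum_i \sum_l (F j i * G l c) ^+ 2 <= Ex (fun w => (F *m Ew w *m G) j c ^+ 2).
Proof.
move=> rho0.
have -> : (fun w => (F *m Ew w *m G) j c ^+ 2) =
   (fun w => lin (\matrix_(i < n, l < r) (F j i * G l c)) w ^+ 2).
  by apply/funext => w; rewrite entry_lin.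
apply: le_trans (Ex_lin2 _ rho0).
rewrite le_eqVlt; apply/orP; left; apply/eqP; congr (_ * _).
by apply: eq_bigr => i _; apply: eq_bigr => l _; rewrite mxE.
Qed.

Lemma Ex_comb {f g h : T -> R} (a b c : R) : f \in L1 -> g \in L1 -> h \in L1 ->
  (fun w => f w - a * g w - b * h w + c) \in L1 /\
  Ex (fun w => f w - a * g w - b * h w + c) = Ex f - a * Ex g - b * Ex h + c.
Proof.
move=> hf hg hh.
have E : (fun w => f w - a * g w - b * h w + c) =
   (fun w => f w + ((- a) * g w + ((- b) * h w + c))).
  by apply/funext => w; ring.
have hc : (fun _ : T => c) \in L1 by exact: (Lfun_cst P c 1).
have h1 : (fun w => (- b) * h w + c) \in L1.
  by apply: (LpD (lexx 1%E)) => //; exact: (LpZ (lexx 1%E)).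
have h2 : (fun w => (- a) * g w + ((- b) * h w + c)) \in L1.
  by apply: (LpD (lexx 1%E)) => //; exact: (LpZ (lexx 1%E)).
rewrite E; split; first exact: (LpD (lexx 1%E)).
rewrite ExD // ExD //; last exact: (LpZ (lexx 1%E)).
rewrite ExD //; last exact: (LpZ (lexx 1%E)).
rewrite !ExZ // Ex_cst; ring.
Qed.

Lemma main_noise p (X : 'M[R]_(n, p)) (Bstar : 'M[R]_(p, r)) (D : {set {set 'I_r}}) :
  (p < n)%N ->
  X^T *m X \in unitmx ->
  0 < rho -> rho < 1 ->
  finset.partition D [set: 'I_r]%SET ->
  let Y := fun w : T => X *m Bstar + \matrix_(i < n, c < r) eps i c w in
  exists gamma : R, 0 < gamma /\
    forall Bbar : T -> 'M[R]_(p, r),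
      (forall w, is_minimizer D gamma X (Y w) (Bbar w)) ->
      ('E_P[fun w => sqnorm (Bbar w - Bstar)]
        <= 'E_P[fun w => sqnorm (ols X (Y w) - Bstar)])%E.
Proof.
move=> pn unit rho0 rho1 hD Y.
have n0 : (0 < n)%N by apply: leq_ltn_trans pn.
pose E := Ew.
set M := invmx (X^T *m X) *m X^T.
have MX : M *m X = 1%:M by rewrite /M -mulmxA mulVmx.
have olsE : forall w, ols X (Y w) = Bstar + M *m E w.
  move=> w; rewrite /ols /Y mulmxDr [X^T *m (X *m _)]mulmxA mulmxDr mulmxA (mulVmx unit).
  by rewrite mul1mx mulmxA.
pose K := Km (R := R) D.
pose V := Ex (fun w => sqnorm (M *m E w *m K)).
have hL2K : forall i j, (fun w => (M *m E w *m K) i j) \in Lfun P 2%:E.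
  by move=> i j; exact: entryL2.
have hL2O : forall i j, (fun w => (M *m E w) i j) \in Lfun P 2%:E.
  by move=> i j; exact: entryL2_1.
have hVs : V = \sum_i \sum_j Ex (fun w => (M *m E w *m K) i j ^+ 2).
  exact: Ex_sqnorm.
have hent : forall j c, (1 - rho) * \sum_i \sum_l (M j i * K l c) ^+ 2 <=
    Ex (fun w => (M *m E w *m K) j c ^+ 2).
  by move=> j c; apply: Ex_entry2_lb.
have hent0 : forall j c, 0 <= Ex (fun w => (M *m E w *m K) j c ^+ 2).
  move=> j c; apply: le_trans (hent j c).
  apply: mulr_ge0; first lra.
  by apply: sumr_ge0 => i _; apply: sumr_ge0 => l _; exact: sqr_ge0.
have V0 : 0 <= V.
  by rewrite hVs; apply: sumr_ge0 => i _; apply: sumr_ge0 => j _; exact: hent0.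
set b := sqnorm (Bstar *m K).
have key : forall g, 0 < g ->
    tpar g ^+ 2 * b <= (2 * tpar g - tpar g ^+ 2) * V ->
    exists gamma : R, 0 < gamma /\
    forall Bbar : T -> 'M[R]_(p, r),
      (forall w, is_minimizer D gamma X (Y w) (Bbar w)) ->
      ('E_P[fun w => sqnorm (Bbar w - Bstar)]
        <= 'E_P[fun w => sqnorm (ols X (Y w) - Bstar)])%E.
  move=> g g0 hineq; exists g; split => // Bbar hmin.
  have BE : forall w, Bbar w = ols X (Y w) *m Smx r D g.
    move=> w; exact: (minimizer_eq _ _ hD _ _ _ _ _ _ n0 unit (ltW g0) (hmin w)).
  have -> : (fun w => sqnorm (Bbar w - Bstar)) =
     (fun w => sqnorm (M *m E w) - (2 * tpar g - tpar g ^+ 2) * sqnorm (M *m E w *m K)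
        - (2 * tpar g - 2 * tpar g ^+ 2) * ip (M *m E w *m K) (Bstar *m K)
        + tpar g ^+ 2 * b).
    apply/funext => w; rewrite BE olsE /Smx pw_id //.
      exact: (Km_tr _ _ hD).
    exact: (Km_idem _ _ hD).
  have -> : (fun w => sqnorm (ols X (Y w) - Bstar)) = (fun w => sqnorm (M *m E w)).
    by apply/funext => w; rewrite olsE addrAC subrr add0r.
  have L1O : (fun w => sqnorm (M *m E w)) \in Lfun P 1 by exact: sqnormL1.
  have L1K : (fun w => sqnorm (M *m E w *m K)) \in Lfun P 1 by exact: sqnormL1.
  have L1I : (fun w => ip (M *m E w *m K) (Bstar *m K)) \in Lfun P 1 by exact: ipL1.
  have [hc1 hc2] := Ex_comb (2 * tpar g - tpar g ^+ 2) (2 * tpar g - 2 * tpar g ^+ 2)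
     (tpar g ^+ 2 * b) L1O L1K L1I.
  rewrite (ExE hc1) (ExE L1O) lee_fin hc2.
  have -> : Ex (fun w => ip (M *m E w *m K) (Bstar *m K)) = 0.
    apply: Ex_ip => // i j; exact: Ex_entry.
  rewrite -/V; lra.
case: (eqVneq b 0) => hb.
  apply: (key 1); first exact: ltr01.
  rewrite hb mulr0.
  have t0 := @tpar_ge0 R 1 ler01; have t1 := @tpar_le1 R 1 ler01.
  apply: mulr_ge0 => //; nra.
have [j0 [c0 hjc]] : exists j0 c0, (Bstar *m K) j0 c0 != 0.
  case: (pickP (fun jc : 'I_p * 'I_r => (Bstar *m K) jc.1 jc.2 != 0)) => [[j0 c0] h|h].
    by exists j0, c0.
  have h0 : Bstar *m K = 0.
    by apply/matrixP => j c; have := h (j, c); move=> /= /negbFE/eqP ->; rewrite mxE.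
  move: hb; rewrite /b h0 /sqnorm big1 ?eqxx // => j _.
  by apply: big1 => c _; rewrite mxE expr2 mul0r.
have [k0 hk] : exists k0, K k0 c0 != 0.
  case: (pickP (fun k => K k c0 != 0)) => [k h|h]; first by exists k.
  move: hjc; rewrite mxE big1 ?eqxx // => k _.
  by have := h k; move=> /= /negbFE/eqP ->; rewrite mulr0.
have [i0 hi] : exists i0, M j0 i0 != 0.
  case: (pickP (fun i => M j0 i != 0)) => [i h|h]; first by exists i.
  have := congr1 (fun A : 'M[R]_p => A j0 j0) MX; rewrite !mxE eqxx big1 //.
    by move/eqP; rewrite eq_sym oner_eq0.
  by move=> i _; have := h i; move=> /= /negbFE/eqP ->; rewrite mul0r.
set v0 := (1 - rho) * (M j0 i0 * K k0 c0) ^+ 2.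
have v0pos : 0 < v0.
  apply: mulr_gt0; first lra.
  by rewrite exprn_even_gt0 //= mulf_neq0.
have hV : v0 <= V.
  rewrite hVs.
  apply: (le_trans _ (le_sum_term j0 _)); last first.
    by move=> j; apply: sumr_ge0 => c _; exact: hent0.
  apply: (le_trans _ (le_sum_term c0 _)); last by move=> c; exact: hent0.
  apply: (le_trans _ (hent j0 c0)).
  rewrite /v0 ler_wpM2l //; first lra.
  apply: (le_trans _ (le_sum_term i0 _)); last first.
    by move=> i; apply: sumr_ge0 => l _; exact: sqr_ge0.
  apply: (le_trans _ (le_sum_term k0 _)) => //; move=> l; exact: sqr_ge0.
have bpos : 0 < b by rewrite lt_def hb sqnorm_ge0.
pose g := v0 / (2 * b).
have g0 : 0 < g by rewrite /g divr_gt0 // mulr_gt0.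
apply: (key g g0).
set t := tpar g.
have t0 : 0 <= t by exact/tpar_ge0/ltW.
have t1 : t <= 1 by exact/tpar_le1/ltW.
have tb : t * b <= v0.
  have hb2 : b != 0 by [].
  have h12 : 1 + 2 * g != 0 by rewrite gt_eqF //; lra.
  have e : t * b = v0 / (1 + 2 * g).
    have gb : 2 * g * b = v0 by rewrite /g; field.
    rewrite /t /tpar -gb; field; by rewrite h12.
  rewrite e ler_pdivrMr; last lra.
  nra.
have h1 : t * (t * b) <= t * v0 by exact: ler_wpM2l.
have h2 : t * v0 <= t * V by exact: ler_wpM2l.
have h3 : t * V <= (2 * t - t ^+ 2) * V.
  rewrite -subr_ge0 -mulrBl; apply: mulr_ge0 => //; nra.
have e2 : t ^+ 2 * b = t * (t * b) by ring.
rewrite e2; lra.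
Qed.

End Noise.

Theorem theorem2 (R : realType) (d : measure_display) (T : measurableType d)
  (P : probability T R) (n p r : nat) (X : 'M[R]_(n, p)) (Bstar : 'M[R]_(p, r))
  (eps : 'I_n -> 'I_r -> {RV P >-> R}) (rho : R) (D : {set {set 'I_r}}) :
  (p < n)%N ->
  X^T *m X \in unitmx ->
  0 < rho < 1 ->
  rows_independent P (fun i c => eps i c : T -> R) ->
  rows_identically_distributed P (fun i c => eps i c : T -> R) ->
  (forall i c, ('E_P[eps i c] = 0)%E) ->
  (forall i c, ('E_P[fun w => (eps i c w ^+ 2)%R] = 1)%E) ->
  (forall i c k, c != k -> ('E_P[fun w => (eps i c w * eps i k w)%R] = rho%:E)%E) ->
  finset.partition D [set: 'I_r]%SET ->
  let Y := fun w : T => X *m Bstar + \matrix_(i < n, c < r) eps i c w in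
  exists gamma : R, 0 < gamma /\
    forall Bbar : T -> 'M[R]_(p, r),
      (forall w, is_minimizer D gamma X (Y w) (Bbar w)) ->
      ('E_P[fun w => sqnorm (Bbar w - Bstar)]
        <= 'E_P[fun w => sqnorm (ols X (Y w) - Bstar)])%E.
Proof.
move=> pn unit /andP[rho0 rho1] Hind Hid HE0 HE2 HEc hD.
exact: (@main_noise d T R P n r eps rho Hind HE0 HE2 HEc p X Bstar D pn unit rho0 rho1 hD).
Qed.
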